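(* Let $S$ be a Hausdorff pseudocompact semitopological semigroup which is an orthogonal sum $S=\sum_{i\in\mathscr I}B^0_{\lambda_i}(S_i)$ of topological Brandt $\lambda_i^0$-extensions of semitopological monoids $S_i$ with zeros. Then (i) for every $i\in\mathscr I$ the subspace $B^0_{\lambda_i}(S_i)$ is pseudocompact; (ii) for all $i\in\mathscr I$ and $\alpha_i,\beta_i\in\lambda_i$ the subspace $(S_i)_{\alpha_i,\beta_i}$ is pseudocompact.
   Context: All spaces are Hausdorff; a semitopological semigroup is a Hausdorff space with separately continuous associative operation; a space is pseudocompact if every locally finite family of non-empty open sets is finite. For a semigroup $T$ with zero $0_T$ and a cardinal $\lambda\ge1$, $B^0_\lambda(T)=(\lambda\times (T\setminus\{0_T\})\times\lambda)\cup\{0\}$ with $(\alpha,a,\beta)(\gamma,b,\delta)=(\alpha,ab,\delta)$ if $\beta=\gamma$ and $ab\ne0_T$, and $0$ otherwise, $0$ a zero. For $A\subseteq T$, $A_{\alpha,\beta}=\{(\alpha,s,\beta):s\in A\setminus\{0_T\}\}\cup\{0\}$ if $0_T\in A$ and $\{(\alpha,s,\beta):s\in A\}$ otherwise. A topological Brandt $\lambda^0$-extension of a semitopological monoid $T$ with zero is $B^0_\lambda(T)$ with a topology making it a semitopological semigroup such that for some $\alpha\in\lambda$ the map $s\mapsto(\alpha,s,\alpha)$ ($0_T\mapsto0$) is a homeomorphism $T\to T_{\alpha,\alpha}$. The orthogonal sum of semigroups $T_\iota$ with zeros is $\{0\}\cup\bigcup_\iota(T_\iota\setminus\{0_\iota\})$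 with products computed in $T_\iota$ when both factors lie in the same $T_\iota$ and the product is non-zero, and $0$ otherwise. *)

(* Defs.v *)
From Stdlib Require Import List.

Set Implicit Arguments.

Record topology (X : Type) := Topology {
  is_open : (X -> Prop) -> Prop;
  open_full : is_open (fun _ => True);
  open_inter : forall U V, is_open U -> is_open V ->
                 is_open (fun x => U x /\ V x);
  open_union : forall F : (X -> Prop) -> Prop,
                 (forall U, F U -> is_open U) ->
                 is_open (fun x => exists U, F U /\ U x)
}.

Definition hausdorff (X : Type) (tX : topology X) : Prop :=
  forall x y : X, x <> y ->
    exists U V, is_open tX U /\ is_open tX V /\ U x /\ V y /\
      (forall z, ~ (U z /\ V z)).

Definition continuous (X Y : Type) (tX : topology X) (tY : topology Y)
  (f : X -> Y) : Prop :=
  forall V, is_open tY V -> is_open tX (fun x => V (f x)).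

Definition finite_type (J : Type) : Prop :=
  exists l : list J, forall j, In j l.

(** Open subsets of A are the traces [A ∩ U]. *)
Definition pseudocompact_subspace (X : Type) (tX : topology X)
  (A : X -> Prop) : Prop :=
  forall (J : Type) (F : J -> X -> Prop),
    (forall j, exists U, is_open tX U /\
                 (forall x, F j x <-> (A x /\ U x))) ->
    (forall j, exists x, F j x) ->
    (forall a, A a -> exists V, is_open tX V /\ V a /\
        exists l : list J, forall j,
          (exists y, A y /\ V y /\ F j y) -> In j l) ->
    finite_type J.

Definition pseudocompact (X : Type) (tX : topology X) : Prop :=
  pseudocompact_subspace tX (fun _ => True).

Definition semitopological_semigroup (X : Type) (tX : topology X)
  (mul : X -> X -> X) : Prop :=
  hausdorff tX /\
  (forall x y z, mul x (mul y z) = mul (mul x y) z) /\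
  (forall a, continuous tX tX (mul a)) /\
  (forall a, continuous tX tX (fun x => mul x a)).

Definition semitopological_monoid_with_zero (T : Type) (tT : topology T)
  (mul : T -> T -> T) (one zero : T) : Prop :=
  semitopological_semigroup tT mul /\
  (forall s, mul one s = s) /\ (forall s, mul s one = s) /\
  (forall s, mul zero s = zero) /\ (forall s, mul s zero = zero).

Definition homeomorphism_onto_image (T X : Type) (tT : topology T)
  (tX : topology X) (f : T -> X) : Prop :=
  continuous tT tX f /\
  (forall s t, f s = f t -> s = t) /\
  (forall U, is_open tT U ->
     exists W, is_open tX W /\ forall s, U s <-> W (f s)).

(** [X] (with zero [zero] and multiplication [mul]) is identified with the
    orthogonal sum  Σ_{i∈I} B^0_{L i}(T i)  through the maps
    [emb i a s b] = (a,s,b) ∈ B^0_{L i}(T i) for s ≠ 0_{T i}, and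
    [emb i a 0 b] = 0.  The data below says exactly that [emb] is a
    bijection from the disjoint union of the sets (L i × (T i ∖ {0}) × L i)
    onto X ∖ {0}, and that [mul] is the orthogonal-sum Brandt product. *)
Definition is_orthogonal_sum_Brandt (I : Type) (L T : I -> Type)
  (tmul : forall i, T i -> T i -> T i) (tzero : forall i, T i)
  (X : Type) (mul : X -> X -> X) (zero : X)
  (emb : forall i, L i -> T i -> L i -> X) : Prop :=
  (forall i, inhabited (L i)) /\
  (forall i a b, emb i a (tzero i) b = zero) /\
  (forall i a s b, s <> tzero i -> emb i a s b <> zero) /\
  (forall i a s b j c t d, s <> tzero i -> t <> tzero j ->
     emb i a s b = emb j c t d ->
     existT (fun k => (L k * T k * L k)%type) i (a, s, b) =
     existT (fun k => (L k * T k * L k)%type) j (c, t, d)) /\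
  (forall x, x = zero \/ exists i a s b, s <> tzero i /\ x = emb i a s b) /\
  (forall x, mul zero x = zero) /\ (forall x, mul x zero = zero) /\
  (forall i a s b c t d, b = c ->
     mul (emb i a s b) (emb i c t d) = emb i a (tmul i s t) d) /\
  (forall i a s b c t d, b <> c ->
     mul (emb i a s b) (emb i c t d) = zero) /\
  (forall i j a s b c t d, i <> j ->
     mul (emb i a s b) (emb j c t d) = zero).

Definition Brandt_summand (I : Type) (L T : I -> Type) (X : Type) (zero : X)
  (emb : forall i, L i -> T i -> L i -> X) (i : I) : X -> Prop :=
  fun x => x = zero \/ exists a s b, x = emb i a s b.

(** The subset (T i)_{α,β} = {(α,s,β) : s ∈ T i ∖ {0}} ∪ {0}. *)
Definition Brandt_cell (I : Type) (L T : I -> Type) (X : Type)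
  (emb : forall i, L i -> T i -> L i -> X) (i : I) (a b : L i) : X -> Prop :=
  fun x => exists s, x = emb i a s b.

Arguments is_orthogonal_sum_Brandt [I] L T tmul tzero [X] mul zero emb.
Arguments Brandt_summand [I L T X] zero emb i _.
Arguments Brandt_cell [I L T X] emb i a b _.

(* Main.v *)
Require Import Defs.
From Stdlib Require Import List.
From Stdlib Require Import Classical ClassicalEpsilon FunctionalExtensionality PropExtensionality.

Lemma open_ext (X : Type) (tX : topology X) (U V : X -> Prop) :
  is_open tX U -> (forall x, U x <-> V x) -> is_open tX V.
Proof.
  intros HU H. replace V with U; auto.
  apply functional_extensionality; intro x; apply propositional_extensionality; auto.
Qed.

Lemma open_Union (X K : Type) (tX : topology X) (P : K -> X -> Prop) :
  (forall k, is_open tX (P k)) -> is_open tX (fun x => exists k, P k x).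
Proof.
  intros H.
  apply open_ext with (U := fun x => exists U, (exists k, U = P k) /\ U x).
  - apply open_union. intros U [k ->]. auto.
  - intro x; split.
    + intros [U [[k ->] Hx]]; eauto.
    + intros [k Hk]; exists (P k); eauto.
Qed.

Lemma pc_image (X : Type) (tX : topology X) (A : X -> Prop) (f : X -> X) :
  pseudocompact tX ->
  (forall U, is_open tX U -> is_open tX (fun x => U (f x))) ->
  (forall x, A (f x)) -> (forall a, A a -> exists x, f x = a) ->
  pseudocompact_subspace tX A.
Proof.
  intros Hpc Hc HA Hs J F Hop Hne Hlf.
  apply (Hpc J (fun j x => F j (f x))).
  - intro j. destruct (Hop j) as [U [HU HF]].
    exists (fun x => U (f x)); split; [auto|].
    intro x; rewrite HF; intuition.
  - intro j. destruct (Hne j) as [y Hy].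
    destruct (Hop j) as [U [HU HF]]. apply HF in Hy.
    destruct (Hs y (proj1 Hy)) as [x <-]. exists x; apply HF; auto.
  - intros a _. destruct (Hlf (f a) (HA a)) as [V [HV [Va [l Hl]]]].
    exists (fun x => V (f x)); split; [auto|]; split; [auto|].
    exists l. intros j [y [_ [Vy Fy]]]. apply Hl. exists (f y); auto.
Qed.

Theorem proposition2p6
  (I : Type) (L T : I -> Type)
  (tT : forall i, topology (T i))
  (tmul : forall i, T i -> T i -> T i) (tone tzero : forall i, T i)
  (X : Type) (tX : topology X) (mul : X -> X -> X) (zero : X)
  (emb : forall i, L i -> T i -> L i -> X) :
  (* S is a Hausdorff pseudocompact semitopological semigroup *)
  semitopological_semigroup tX mul ->
  pseudocompact tX ->
  (* S is the orthogonal sum of the B^0_{λ_i}(S_i) *)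
  is_orthogonal_sum_Brandt L T tmul tzero mul zero emb ->
  (* each S_i is a semitopological monoid with zero *)
  (forall i, semitopological_monoid_with_zero (tT i) (tmul i) (tone i) (tzero i)) ->
  (* each B^0_{λ_i}(S_i) (with the subspace topology) is a topological
     Brandt λ_i^0-extension of S_i: for some α the map s ↦ (α,s,α)
     is a homeomorphism of S_i onto (S_i)_{α,α} *)
  (forall i, exists a : L i,
     homeomorphism_onto_image (tT i) tX (fun s => emb i a s a)) ->
  (forall i, pseudocompact_subspace tX (Brandt_summand zero emb i)) /\
  (forall i (a b : L i), pseudocompact_subspace tX (Brandt_cell emb i a b)).
Proof.
  intros [Hhaus [_ [HcL HcR]]] Hpc
    [_ [Hz0 [Hnz [Hinj [Hsurj [Hm0l [Hm0r [Hsame [Hdiff Hother]]]]]]]]] Hmon _.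
  set (phi := fun i (a b : L i) y =>
          mul (mul (emb i a (tone i) a) y) (emb i b (tone i) b)).
  assert (Hphic : forall i a b U, is_open tX U -> is_open tX (fun y => U (phi i a b y))).
  { intros i a b U HU. unfold phi.
    apply (HcL (emb i a (tone i) a) (fun x => U (mul x (emb i b (tone i) b)))).
    apply (HcR (emb i b (tone i) b)). exact HU. }
  assert (Hphiz : forall i a b, phi i a b zero = zero).
  { intros. unfold phi. rewrite Hm0r, Hm0l. auto. }
  assert (Hphiid : forall i a b s, phi i a b (emb i a s b) = emb i a s b).
  { intros. unfold phi. destruct (Hmon i) as [_ [H1 [H2 _]]].
    rewrite Hsame by auto. rewrite Hsame by auto. rewrite H1, H2. auto. }
  assert (Hphi : forall i a b y, phi i a b y = zero \/
            exists s, y = emb i a s b /\ phi i a b y = y).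
  { intros i a b y. destruct (Hsurj y) as [-> | [j [c [s [d [Hs ->]]]]]].
    - left; auto.
    - destruct (classic (j = i)) as [Hji | Hji].
      + subst j. destruct (classic (c = a)) as [Hca | Hca].
        * subst c. destruct (classic (d = b)) as [Hdb | Hdb].
          -- subst d. right. exists s. auto.
          -- left. unfold phi. destruct (Hmon i) as [_ [H1 _]].
             rewrite Hsame by auto. rewrite H1. apply Hdiff; auto.
        * left. unfold phi. rewrite Hdiff by auto. apply Hm0l.
      + left. unfold phi. rewrite Hother by auto. apply Hm0l. }
  assert (Hphicell : forall i a b y, exists s, phi i a b y = emb i a s b).
  { intros i a b y. destruct (Hphi i a b y) as [H | [s [Hy H]]].
    - exists (tzero i). rewrite H, Hz0; auto.
    - exists s. rewrite H; auto. }
  split.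
  2:{ intros i a b. apply pc_image with (f := phi i a b).
      - exact Hpc.
      - intros U HU; apply Hphic; auto.
      - intros x. destruct (Hphicell i a b x) as [s Hs]. exists s; auto.
      - intros y [s ->]. exists (emb i a s b). auto. }
  intros i.
  set (O := fun j y => exists (a b : L j), phi j a b y <> zero).
  set (B := Brandt_summand zero emb).
  assert (HNZ : is_open tX (fun y => y <> zero)).
  { apply open_ext with (U := fun y => exists V, (is_open tX V /\ forall z, V z -> z <> zero) /\ V y).
    - apply open_union. tauto.
    - intro y; split.
      + intros [V [[_ HV] Vy]]; auto.
      + intro Hy. destruct (Hhaus y zero Hy) as [U [V [HU [HV [Uy [Vz Hd]]]]]].
        exists U; split; [split|]; auto. intros z Uz ->. apply (Hd zero); auto. }
  assert (HO : forall j, is_open tX (O j)).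
  { intro j. unfold O.
    apply open_ext with (U := fun y => exists ab : L j * L j, phi j (fst ab) (snd ab) y <> zero).
    - apply open_Union. intros [a b]. apply (Hphic j a b _ HNZ).
    - intro y; split.
      + intros [[a b] H]; eauto.
      + intros [a [b H]]. exists (a, b); auto. }
  assert (HO1 : forall j y, O j y -> y <> zero /\ B j y).
  { intros j y [a [b H]]. destruct (Hphi j a b y) as [H' | [s [Hy _]]].
    - contradiction.
    - split.
      + intros ->. apply H. apply Hphiz.
      + right. subst y. eauto. }
  assert (HO2 : forall y, y <> zero -> B i y -> O i y).
  { intros y Hy [H | [a [s [b ->]]]]; [contradiction|].
    exists a, b. rewrite Hphiid. auto. }
  assert (HC : is_open tX (fun y => ~ B i y)).
  { apply open_ext with (U := fun y => exists j, j <> i /\ O j y).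
    - apply open_Union. intro j. destruct (classic (j = i)) as [E | E].
      + apply open_ext with (U := fun x : X => exists W : X -> Prop, False /\ W x).
        * apply open_union. intros _ [].
        * intro; split; [intros [? [[] _]]| intros [? _]; contradiction].
      + apply open_ext with (U := O j). auto. intro; tauto.
    - intros y; split.
      + intros [j [Hj Hy]]. destruct (HO1 j y Hy) as [Hnz' [H | [c [s [d Hyd]]]]].
        * contradiction.
        * intros [H | [a [t [b Hyi]]]]; [contradiction|].
          assert (s <> tzero j) by (intros ->; apply Hnz'; rewrite Hyd; auto).
          assert (t <> tzero i) by (intros ->; apply Hnz'; rewrite Hyi; auto).
          rewrite Hyd in Hyi.
          pose proof (Hinj j c s d i a t b H H0 Hyi) as E.
          apply (f_equal (@projT1 _ _)) in E. simpl in E. auto.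
      + intros Hy. destruct (Hsurj y) as [-> | [j [c [s [d [Hs ->]]]]]].
        * exfalso; apply Hy; left; auto.
        * exists j. split.
          -- intros ->. apply Hy. right; eauto.
          -- exists c, d. rewrite Hphiid. auto. }
  set (r := fun y => if excluded_middle_informative (B i y) then y else zero).
  apply pc_image with (f := r).
  - exact Hpc.
  - intros U HU. destruct (classic (U zero)) as [Uz | Uz].
    + apply open_ext with (U := fun y => exists W, (W = U \/ W = (fun y => ~ B i y)) /\ W y).
      * apply open_union. intros W [-> | ->]; auto.
      * intro y. unfold r. destruct (excluded_middle_informative (B i y)) as [Hb | Hb]; split.
        -- intros [W [[-> | ->] Wy]]; auto. contradiction.
        -- intro; exists U; auto.
        -- auto.
        -- intro; exists (fun y => ~ B i y); auto.
    + apply open_ext with (U := fun y => U y /\ O i y).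
      * apply open_inter; auto.
      * intro y. unfold r. destruct (excluded_middle_informative (B i y)) as [Hb | Hb]; split.
        -- tauto.
        -- intro Uy; split; auto. apply HO2; auto. intros ->; auto.
        -- intros [_ Hy]. exfalso; apply Hb. apply (HO1 i y Hy).
        -- intro; contradiction.
  - intro x. unfold r. destruct (excluded_middle_informative (B i x)); auto. left; auto.
  - intros a Ha. exists a. unfold r. destruct (excluded_middle_informative (B i a)); tauto.
Qed.
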